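(* Let $n>4$ and let $\phi:\mathrm{Aut}(F_n)\to\mathrm{Diff}^2_+(S^1)$ be a homomorphism. For $i\neq j$ put $a_{ij}=\phi(A_{ij})$ and $b_{ij}=\phi(B_{ij})$. Then each of the diffeomorphisms $a_{ij}$ and $b_{ij}$ has a fixed point.
   Context: $F_n$ is the free group with basis $e_1,\dots,e_n$. For $i\neq j$, $A_{ij}\in\mathrm{Aut}(F_n)$ is defined by $A_{ij}(e_i)=e_ie_j$ and $A_{ij}(e_k)=e_k$ for $k\neq i$, and $B_{ij}\in\mathrm{Aut}(F_n)$ by $B_{ij}(e_i)=e_je_i$ and $B_{ij}(e_k)=e_k$ for $k\neq i$. $\mathrm{Diff}^2_+(S^1)$ is the group of orientation-preserving $C^2$ diffeomorphisms of $S^1$. *)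

(* Defs.v *)
From Stdlib Require Import Reals ZArith.
From Coquelicot Require Import Coquelicot.
From HB Require Import structures.
From mathcomp Require Import all_boot.

Set Implicit Arguments.
Unset Strict Implicit.
Unset Printing Implicit Defensive.

(* A letter (i, false) is e_i, a letter (i, true) is e_i^{-1}. *)
Definition letter (n : nat) := ('I_n * bool)%type.
Definition word (n : nat) := seq (letter n).

Definition push n (x : letter n) (w : word n) : word n :=
  match w with
  | y :: t => if (y.1 == x.1) && (y.2 != x.2) then t else x :: w
  | [::] => [:: x]
  end.

Definition norm n (w : word n) : word n := foldr (@push n) [::] w.

Definition reducedb n (w : word n) : bool := norm w == w.

Record FG (n : nat) := MkFG { fgw : word n; _ : reducedb fgw }.

HB.instance Definition _ n := [isSub for (@fgw n)].
HB.instance Definition _ n := [Equality of FG n by <:].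

Definition fg1 n : FG n := @MkFG n [::] (eqxx _).

Definition fgmul n (u v : FG n) : FG n := insubd (fg1 n) (norm (fgw u ++ fgw v)).

Definition gen n (i : 'I_n) : FG n := insubd (fg1 n) [:: (i, false)].

(* Group composition in Aut(F_n) is function composition f \o g. *)
Definition is_aut n (f : FG n -> FG n) : Prop :=
  (forall u v, f (fgmul u v) = fgmul (f u) (f v)) /\ bijective f.

Definition is_Aij n (i j : 'I_n) (f : FG n -> FG n) : Prop :=
  is_aut f /\ f (gen i) = fgmul (gen i) (gen j) /\
  (forall k, k <> i -> f (gen k) = gen k).

Definition is_Bij n (i j : 'I_n) (f : FG n -> FG n) : Prop :=
  is_aut f /\ f (gen i) = fgmul (gen j) (gen i) /\
  (forall k, k <> i -> f (gen k) = gen k).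

Open Scope R_scope.

Definition is_C2 (h : R -> R) : Prop :=
  forall x, ex_derive h x /\ ex_derive (Derive h) x /\
            continuous (Derive (Derive h)) x.

(* h : R -> R is a lift of an element of Diff^2_+(S^1). *)
Definition diff2_lift (h : R -> R) : Prop :=
  is_C2 h /\ (forall x, 0 < Derive h x) /\ (forall x, h (x + 1) = h x + 1).

(* The circle map with lift h has a fixed point on S^1 = R/Z. *)
Definition circ_fixed_point (h : R -> R) : Prop :=
  exists (x : R) (k : Z), h x = x + IZR k.

(* Main.v *)
Require Import Defs.
From Stdlib Require Import Reals ZArith.
From Coquelicot Require Import Coquelicot.
From mathcomp Require Import all_boot.
From Stdlib Require Import Lra Lia.
From Stdlib Require FunctionalExtensionality Classical_Prop.
Set Implicit Arguments. Unset Strict Implicit. Unset Printing Implicit Defensive.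

Section FreeGroup.
Variable n : nat.
Local Notation L := (letter n).
Local Notation W := (word n).
Local Notation nrm := (@Defs.norm n).

Definition linv (x : L) : L := (x.1, ~~ x.2).

Lemma linvK x : linv (linv x) = x.
Proof. by case: x => i b; rewrite /linv /= negbK. Qed.

Lemma pushE x (w : W) : push x w =
  match w with y :: t => if y == linv x then t else x :: w | [::] => [:: x] end.
Proof.
  case: w => // -[j c] t; case: x => i b /=.
  rewrite /linv /= xpair_eqE; by case: b; case: c.
Qed.

Lemma cancE (x y : L) : ((y.1 == x.1) && (y.2 != x.2)) = (y == linv x).
Proof. case: x => i b; case: y => j c; rewrite /linv /= xpair_eqE; by case: b; case: c. Qed.

Fixpoint red (w : W) : bool :=
  match w with
  | x :: ((y :: _) as t) => (y != linv x) && red t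
  | _ => true
  end.

Lemma red_tail x (w : W) : red (x :: w) -> red w.
Proof. by case: w => //= y t /andP[]. Qed.

Lemma push_red x (w : W) : red w -> red (push x w).
Proof.
  rewrite pushE; case: w => // y t Hw.
  case: ifP => [_|/negbT H]; first exact: red_tail Hw.
  by rewrite /= H.
Qed.

Lemma norm_red (w : W) : red (nrm w).
Proof. elim: w => //= x w IH; exact: push_red. Qed.

Lemma push_redE x (w : W) : red (x :: w) -> push x w = x :: w.
Proof. rewrite pushE; case: w => // y t /= /andP[H _]; by rewrite (negbTE H). Qed.

Lemma norm_id (w : W) : red w -> nrm w = w.
Proof.
  elim: w => //= x w IH Hw. rewrite IH; first exact: push_redE.
  exact: red_tail Hw.
Qed.

Lemma reducedP (w : W) : reducedb w = red w.
Proof.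
  rewrite /reducedb; apply/eqP/idP => [<-|H]; first exact: norm_red.
  exact: norm_id.
Qed.

Lemma canc_push x (w : W) : red w -> push x (push (linv x) w) = w.
Proof.
  case: w => [|y t] Hw.
  - by case: x => i b; case: b; rewrite /= eqxx.
  - rewrite [push (linv x) _]pushE linvK. case: ifP => [/eqP Ey|Hy].
    + subst y. case: t Hw => [|z t] Hw //.
      move: Hw => /= /andP[H _]. by rewrite cancE (negbTE H).
    + by rewrite pushE eqxx.
Qed.

Definition act (u w : W) : W := foldr (@push n) w u.

Lemma act_cat u v w : act (u ++ v) w = act u (act v w).
Proof. by rewrite /act foldr_cat. Qed.

Lemma act_red u w : red w -> red (act u w).
Proof. elim: u => //= x u IH Hw; apply: push_red; exact: IH. Qed.

Lemma norm_cat u v : nrm (u ++ v) = act u (nrm v).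
Proof. by rewrite /Defs.norm foldr_cat. Qed.

Lemma act_norm u w : red w -> act (nrm u) w = act u w.
Proof.
  move=> Hw; elim: u => //= x u IH.
  rewrite [in RHS]/act /= -/(act u w) -IH.
  case E: (nrm u) => [|y t]; first by [].
  have [Hy|Hy] := eqVneq y (linv x).
  - rewrite [push x (y :: t)]pushE Hy eqxx /= canc_push //. exact: act_red.
  - by rewrite [push x (y :: t)]pushE (negbTE Hy).
Qed.

Definition winv (u : W) : W := rev (map linv u).

Lemma act_winv u w : red w -> act u (act (winv u) w) = w.
Proof.
  elim: u w => //= x u IH w Hw.
  rewrite /winv map_cons rev_cons -cats1 act_cat /=.
  rewrite -/(act u _) -/(winv u) IH; first exact: canc_push.
  exact: push_red.
Qed.

Lemma winvK u : winv (winv u) = u.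
Proof. by rewrite /winv map_rev revK -map_comp map_id_in // => x _; rewrite /= linvK. Qed.

Local Notation G := (FG n).
Local Notation "u * v" := (@fgmul n u v).

Definition mk (w : W) : G := insubd (fg1 n) (nrm w).

Lemma mkK w : fgw (mk w) = nrm w.
Proof.
  have H : reducedb (nrm w) by rewrite reducedP norm_red.
  by rewrite /mk insubdK.
Qed.

Lemma fgw_red (u : G) : red (fgw u).
Proof. case: u => w /=; by rewrite reducedP. Qed.

Lemma fgw_inj (u v : G) : fgw u = fgw v -> u = v.
Proof. exact: val_inj. Qed.

Lemma fgwK (u : G) : mk (fgw u) = u.
Proof. apply: fgw_inj; rewrite mkK norm_id //; exact: fgw_red. Qed.

Lemma mulE u v : fgw (u * v) = act (fgw u) (fgw v).
Proof.
  rewrite /fgmul -/(mk _) mkK norm_cat norm_id //; exact: fgw_red.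
Qed.

Lemma actN u v : red v -> act u v = nrm (u ++ v).
Proof. by move=> H; rewrite norm_cat norm_id. Qed.

Lemma mulA u v w : u * (v * w) = (u * v) * w.
Proof.
  apply: fgw_inj; rewrite !mulE.
  rewrite [act (fgw u) (fgw v)]actN ?fgw_red // act_norm ?fgw_red //.
  by rewrite act_cat.
Qed.

Lemma mul1g u : fg1 n * u = u.
Proof. by apply: fgw_inj; rewrite mulE. Qed.

Lemma mulg1 u : u * fg1 n = u.
Proof. apply: fgw_inj; rewrite mulE /=. rewrite -[RHS](norm_id (fgw_red u)). by []. Qed.

Definition fginv (u : G) : G := mk (winv (fgw u)).

Lemma mulgV u : u * fginv u = fg1 n.
Proof.
  apply: fgw_inj; rewrite mulE mkK /=.
  rewrite -[winv _]cats0 norm_cat /=. exact: act_winv.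
Qed.

Lemma mulVg u : fginv u * u = fg1 n.
Proof.
  apply: fgw_inj; rewrite mulE mkK act_norm ?fgw_red //=.
  have E : act (fgw u) [::] = fgw u := norm_id (fgw_red u).
  rewrite -{2}E. have := @act_winv (winv (fgw u)) [::] isT. by rewrite winvK.
Qed.

Lemma inv_uniq u v : u * v = fg1 n -> v = fginv u.
Proof.
  move=> H. by rewrite -[v]mul1g -(mulVg u) -mulA H mulg1.
Qed.

Definition hom (h : G -> G) := forall u v, h (u * v) = h u * h v.

Lemma hom1 h : hom h -> h (fg1 n) = fg1 n.
Proof.
  move=> Hh. have E : h (fg1 n) = h (fg1 n) * h (fg1 n) by rewrite -Hh mul1g.
  move: E; set x := h (fg1 n) => E.
  have : fginv x * (x * x) = fginv x * x by rewrite -E.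
  by rewrite mulA mulVg mul1g.
Qed.

Lemma homV h u : hom h -> h (fginv u) = fginv (h u).
Proof. move=> Hh; apply: inv_uniq; by rewrite -Hh mulgV hom1. Qed.

Lemma mk_cons x t : red (x :: t) -> mk (x :: t) = mk [:: x] * mk t.
Proof.
  move=> H; apply: fgw_inj; rewrite mulE !mkK /=.
  rewrite (norm_id (red_tail H)). by rewrite push_redE.
Qed.

Lemma genE (i : 'I_n) : fgw (gen i) = [:: (i, false)].
Proof. have H : reducedb [:: (i, false)] by rewrite reducedP. by rewrite /gen insubdK. Qed.

Lemma mk_letter (x : L) : mk [:: x] = if x.2 then fginv (gen x.1) else gen x.1.
Proof.
  case: x => i [] /=; apply: fgw_inj; last by [].
  rewrite /fginv !mkK genE. by [].
Qed.


Lemma mk_nil : mk [::] = fg1 n.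
Proof. by apply: fgw_inj; rewrite mkK. Qed.

Lemma hom_ext h1 h2 : hom h1 -> hom h2 -> (forall i, h1 (gen i) = h2 (gen i)) ->
  forall u, h1 u = h2 u.
Proof.
  move=> H1 H2 Hg u. rewrite -(fgwK u). have := fgw_red u.
  elim: (fgw u) => [|x t IH] Hr.
  - by rewrite mk_nil !hom1.
  - rewrite mk_cons // H1 H2 IH; last exact: red_tail Hr.
    rewrite mk_letter; case: (x.2); last by rewrite Hg.
    by rewrite !homV // Hg.
Qed.

Section Letterwise.
Variable tau : 'I_n -> 'I_n.
Hypothesis tau_inj : injective tau.

Definition lmap (x : L) : L := (tau x.1, x.2).

Lemma lmap_eq y z : (lmap y == lmap z) = (y == z).
Proof. apply/eqP/eqP => [|->] //; case: y z => a b [c d] /= [] /tau_inj -> ->. by []. Qed.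

Lemma push_map x w : push (lmap x) (map lmap w) = map lmap (push x w).
Proof.
  rewrite !pushE; case: w => // y t /=.
  have -> : linv (lmap x) = lmap (linv x) by [].
  by rewrite lmap_eq; case: ifP.
Qed.

Lemma norm_map w : nrm (map lmap w) = map lmap (nrm w).
Proof. elim: w => //= x w IH; by rewrite IH push_map. Qed.

Lemma red_map w : red w -> red (map lmap w).
Proof. move=> H; have := norm_red (map lmap w); by rewrite norm_map norm_id. Qed.

Definition Lm (u : G) : G := mk (map lmap (fgw u)).

Lemma LmE u : fgw (Lm u) = map lmap (fgw u).
Proof. by rewrite mkK norm_map norm_id ?fgw_red. Qed.

Lemma Lm_hom : hom Lm.
Proof.
  move=> u v; apply: fgw_inj; rewrite mulE !LmE mulE.
  rewrite (actN _ (fgw_red v)) (actN _ (red_map (fgw_red v))).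
  by rewrite -map_cat norm_map.
Qed.

Lemma Lm_gen i : Lm (gen i) = gen (tau i).
Proof. by apply: fgw_inj; rewrite LmE !genE. Qed.

End Letterwise.

Lemma Lm_can tau tau' : injective tau -> injective tau' -> (forall m, tau (tau' m) = m) ->
  forall u, Lm tau (Lm tau' u) = u.
Proof.
  move=> I1 I2 H u; apply: fgw_inj; rewrite !LmE // -map_comp map_id_in // => x _.
  by case: x => a b; rewrite /lmap /= H.
Qed.

Lemma is_aut_Lm tau tau' : (forall m, tau (tau' m) = m) -> (forall m, tau' (tau m) = m) ->
  is_aut (Lm tau).
Proof.
  move=> H1 H2. have I1 := can_inj H2. have I2 := can_inj H1.
  split; first exact: Lm_hom.
  exists (Lm tau') => u; exact: Lm_can.
Qed.

Lemma is_aut_comp (f g : G -> G) : is_aut f -> is_aut g -> is_aut (f \o g).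
Proof.
  move=> [Hf Bf] [Hg Bg]; split; last exact: bij_comp.
  by move=> u v /=; rewrite Hg Hf.
Qed.

Definition M (s : bool) (x y : G) := if s then y * x else x * y.

Lemma hom_M h s x y : hom h -> h (M s x y) = M s (h x) (h y).
Proof. by move=> H; case: s; rewrite /M H. Qed.

Definition sw (a b m : 'I_n) := if m == a then b else if m == b then a else m.

Lemma swK a b m : sw a b (sw a b m) = m.
Proof.
  rewrite /sw; case: (eqVneq m a) => [->|Ha].
  - case: (eqVneq b a) => [->|Hb]; by rewrite ?eqxx.
  - case: (eqVneq m b) => [->|Hb]; first by rewrite eqxx.
    by rewrite (negbTE Ha) (negbTE Hb).
Qed.

Lemma sw1 a b : sw a b a = b. Proof. by rewrite /sw eqxx. Qed.
Lemma sw2 a b : sw a b b = a.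
Proof. rewrite /sw; case: (eqVneq b a) => [->|H] //; by rewrite eqxx. Qed.
Lemma sw3 a b m : m != a -> m != b -> sw a b m = m.
Proof. by rewrite /sw => /negbTE -> /negbTE ->. Qed.


Lemma sw_inj a b : injective (sw a b).
Proof. exact: can_inj (swK a b). Qed.

Lemma relations (i j k : 'I_n) (f : G -> G) s :
  i != j -> i != k -> j != k -> is_aut f ->
  f (gen i) = M s (gen i) (gen j) -> (forall m, m <> i -> f (gen m) = gen m) ->
  exists sg b c : G -> G, [/\ is_aut sg, is_aut b & is_aut c] /\
     [/\ f \o b = b \o f, sg \o f = b \o sg & c \o (f \o b) = f \o c].
Proof.
  move=> Hij Hik Hjk Af Fi Fo.
  have Hji : j != i by rewrite eq_sym.
  have Hki : k != i by rewrite eq_sym.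
  have Hkj : k != j by rewrite eq_sym.
  have hf : hom f := Af.1.
  set t := sw i k.
  have It : injective t := @sw_inj i k.
  set sg := Lm t.
  have Asg : is_aut sg := is_aut_Lm (swK i k) (swK i k).
  have hsg : hom sg := Asg.1.
  set p := fun m => sw i k (sw j k m).
  set p' := fun m => sw j k (sw i k m).
  have pK : forall m, p (p' m) = m by move=> m; rewrite /p /p' swK swK.
  have pK' : forall m, p' (p m) = m by move=> m; rewrite /p /p' swK swK.
  have Ip : injective p := can_inj pK'.
  have Ap := is_aut_Lm pK pK'.
  have Ap' := is_aut_Lm pK' pK.
  have hp : hom (Lm p) := Ap.1.
  set b := sg \o f \o sg.
  set c := Lm p \o f \o Lm p'.
  have Ab : is_aut b := is_aut_comp (is_aut_comp Asg Af) Asg.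
  have Ac : is_aut c := is_aut_comp (is_aut_comp Ap Af) Ap'.
  have hb : hom b := Ab.1.
  have hc : hom c := Ac.1.
  have Fm : forall m, m != i -> f (gen m) = gen m by move=> m /eqP; exact: Fo.
  have bi : b (gen i) = gen i.
  { by rewrite /b /= /sg Lm_gen // /t sw1 Fm // Lm_gen // sw2. }
  have bo : forall m, m != i -> m != k -> b (gen m) = gen m.
  { move=> m H1 H2. by rewrite /b /= /sg Lm_gen // /t sw3 // Fm // Lm_gen // sw3. }
  have bk : b (gen k) = M s (gen k) (gen j).
  { rewrite /b /= /sg Lm_gen // /t sw2 Fi hom_M // !Lm_gen // sw1 sw3 //. }
  have Ip' : injective p' := can_inj pK.
  have ci : c (gen i) = gen i.
  { rewrite /c /= Lm_gen // /p' sw1 sw2 Fm // Lm_gen //.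
    by rewrite /p sw1 sw2. }
  have cj : c (gen j) = gen j.
  { rewrite /c /= Lm_gen // /p' (sw3 Hji Hjk) sw1 Fm // Lm_gen //.
    by rewrite /p sw2 (sw3 Hji Hjk). }
  have ck : c (gen k) = M s (gen k) (gen i).
  { rewrite /c /= Lm_gen // /p' sw2 (sw3 Hij Hik) Fi hom_M // !Lm_gen //.
    by rewrite /p (sw3 Hij Hik) sw1 sw1 sw2. }
  have co : forall m, m != i -> m != j -> m != k -> c (gen m) = gen m.
  { move=> m H1 H2 H3.
    rewrite /c /= Lm_gen // /p' (sw3 H1 H3) (sw3 H2 H3) Fm // Lm_gen //.
    by rewrite /p (sw3 H2 H3) (sw3 H1 H3). }
  exists sg, b, c; split; first by []. split.
  - apply: FunctionalExtensionality.functional_extensionality.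
    apply: hom_ext; [exact: (is_aut_comp Af Ab).1 | exact: (is_aut_comp Ab Af).1 |].
    move=> m /=.
    case: (eqVneq m i) => [->|Hmi]; first by rewrite bi Fi hom_M // bi bo.
    case: (eqVneq m k) => [->|Hmk]; first by rewrite bk hom_M // !Fm.
    by rewrite bo // Fm // bo.
  - apply: FunctionalExtensionality.functional_extensionality => u /=.
    by rewrite /b /= /sg (Lm_can It It (@swK i k)).
  - apply: FunctionalExtensionality.functional_extensionality.
    apply: hom_ext; [exact: (is_aut_comp Ac (is_aut_comp Af Ab)).1
                    | exact: (is_aut_comp Af Ac).1 |].
    move=> m /=.
    case: (eqVneq m i) => [->|Hmi]; first by rewrite bi Fi (@hom_M c _ _ _ hc) ci cj Fi.
    case: (eqVneq m j) => [->|Hmj]; first by rewrite bo // Fm // cj Fm.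
    case: (eqVneq m k) => [->|Hmk].
    + rewrite bk (@hom_M f _ _ _ hf) !Fm // (@hom_M c _ _ _ hc) ck cj.
      rewrite (@hom_M f _ _ _ hf) Fi Fm //.
      by case: s {Fi bk ck}; rewrite /M mulA.
    + by rewrite bo // Fm // co // Fm.
Qed.

End FreeGroup.

Lemma third n (i j : 'I_n) : (2 < n)%N -> exists k : 'I_n, (i != k) && (j != k).
Proof.
  move=> H2.
  have h0 : (0 < n)%N by apply: leq_trans H2.
  have h1 : (1 < n)%N by apply: leq_trans H2.
  pose o0 := Ordinal h0. pose o1 := Ordinal h1. pose o2 := Ordinal H2.
  case: (boolP ((i != o0) && (j != o0))) => H0; first by exists o0.
  case: (boolP ((i != o1) && (j != o1))) => H1; first by exists o1.
  exists o2. move: H0 H1; rewrite !negb_and !negbK -!val_eqE /=.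
  by case: i j => [[|[|[|i]]] Hi] [[|[|[|j]]] Hj].
Qed.

Open Scope R_scope.

Lemma Rabs_inv a b : Rabs a <= b -> - b <= a <= b.
Proof. unfold Rabs; destruct (Rcase_abs a); intros; lra. Qed.

Definition liftp (h : R -> R) :=
  (forall x y, x <= y -> h x <= h y) /\ (forall x, h (x + 1) = h x + 1).

Lemma per_nat h : liftp h -> forall (n : nat) x, h (x + INR n) = h x + INR n.
Proof.
  intros [_ P] n; induction n as [|n IH]; intros x.
  - simpl; rewrite !Rplus_0_r; reflexivity.
  - rewrite S_INR. replace (x + (INR n + 1)) with ((x + INR n) + 1) by ring.
    rewrite P IH; ring.
Qed.

Lemma per_Z h : liftp h -> forall (m : Z) x, h (x + IZR m) = h x + IZR m.
Proof.
  intros H m x. destruct (Z_le_gt_dec 0 m) as [Hm|Hm].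
  - rewrite -(Z2Nat.id m); last lia. rewrite -INR_IZR_INZ. apply per_nat; auto.
  - assert (E : IZR m = - INR (Z.to_nat (- m))).
    { rewrite INR_IZR_INZ Z2Nat.id; last lia. rewrite opp_IZR; ring. }
    rewrite E. set (y := x + - INR (Z.to_nat (-m))).
    replace (h x) with (h (y + INR (Z.to_nat (-m)))) by (f_equal; unfold y; ring).
    rewrite per_nat; auto. ring.
Qed.

Lemma iter_lift h : liftp h -> forall N, liftp (Nat.iter N h).
Proof.
  intros H N; induction N as [|N [IM IP]].
  - split; simpl; auto.
  - split; simpl.
    + intros x y Hxy. apply (proj1 H). auto.
    + intros x. rewrite IP. replace 1 with (IZR 1) by reflexivity. apply per_Z; auto.
Qed.

Lemma L1 g : liftp g -> forall x y, Rabs ((g y - y) - (g x - x)) <= 1.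
Proof.
  intros H x y. destruct (archimed (y - x)) as [A1 A2].
  set (m := (up (y - x) - 1)%Z).
  set (t := y - x - IZR m).
  assert (Ht : 0 <= t < 1) by (unfold t, m; rewrite minus_IZR; simpl; lra).
  assert (Ey : y = (x + t) + IZR m) by (unfold t; ring).
  rewrite Ey. rewrite (per_Z H).
  destruct H as [M P].
  assert (Q1 : g x <= g (x + t)) by (apply M; lra).
  assert (Q2 : g (x + t) <= g (x + 1)) by (apply M; lra).
  rewrite P in Q2. apply Rabs_le; lra.
Qed.

Lemma iter_conj (h g f : R -> R) (k : Z) :
  liftp f -> (forall x, h (g x) = f (h x) + IZR k) ->
  forall N x, h (Nat.iter N g x) = Nat.iter N f (h x) + IZR (Z.of_nat N * k).
Proof.
  intros Hf E N; induction N as [|N IH]; intros x.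
  - simpl; rewrite Rplus_0_r; reflexivity.
  - change (h (g (Nat.iter N g x)) = f (Nat.iter N f (h x)) + IZR (Z.of_nat (S N) * k)).
    rewrite E IH (per_Z Hf). rewrite Nat2Z.inj_succ !mult_IZR succ_IZR. ring.
Qed.

Definition D (f : R -> R) N x := Nat.iter N f x - x.

Lemma conj_bound (h g f : R -> R) (k : Z) :
  liftp h -> liftp f -> liftp g -> (forall x, h (g x) = f (h x) + IZR k) ->
  forall N, Rabs (D g N 0 - D f N 0 - INR N * IZR k) <= 3.
Proof.
  intros Hh Hf Hg E N. unfold D.
  pose proof (@iter_conj h g f k Hf E N 0) as C.
  pose proof (L1 Hh 0 (Nat.iter N g 0)) as B1.
  pose proof (L1 (iter_lift Hf N) 0 (h 0)) as B2.
  rewrite C in B1. rewrite mult_IZR -INR_IZR_INZ in B1.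
  apply Rabs_inv in B1. apply Rabs_inv in B2. apply Rabs_le. simpl in *. lra.
Qed.

Lemma comm_bound (a b : R -> R) :
  liftp a -> liftp b -> (forall x, a (b x) = b (a x)) ->
  forall N, Rabs (D (fun x => a (b x)) N 0 - D a N 0 - D b N 0) <= 1.
Proof.
  intros Ha Hb E N.
  assert (C1 : forall Q x, Nat.iter Q a (b x) = b (Nat.iter Q a x)).
  { intros Q; induction Q as [|Q IHQ]; intros x; simpl; auto. rewrite IHQ E; auto. }
  assert (C2 : forall Q x, Nat.iter Q (fun x => a (b x)) x = Nat.iter Q a (Nat.iter Q b x)).
  { intros Q; induction Q as [|Q IHQ]; intros x; simpl; auto. rewrite IHQ C1. reflexivity. }
  unfold D. rewrite C2.
  pose proof (L1 (iter_lift Ha N) 0 (Nat.iter N b 0)) as B.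
  apply Rabs_inv in B. apply Rabs_le. lra.
Qed.

Lemma comp_lift a b : liftp a -> liftp b -> liftp (fun x => a (b x)).
Proof.
  intros [Ma Pa] [Mb Pb]; split.
  - intros x y H. apply Ma, Mb, H.
  - intros x. rewrite Pb Pa. reflexivity.
Qed.

Lemma gap a : liftp a -> continuity a -> (forall x k, a x <> x + IZR k) ->
  exists p d, 0 < d /\ forall x, IZR p + d <= a x - x <= IZR p + 1 - d.
Proof.
  intros La Ca NF.
  set (g := fun x => a x - x).
  assert (Cg : continuity g) by (apply continuity_minus; [exact Ca | apply derivable_continuous, derivable_id]).
  assert (Cg' : forall c, 0 <= c <= 1 -> continuity_pt g c) by (intros; apply Cg).
  destruct (continuity_ab_min g 0 1 ltac:(lra) Cg') as [xm [Hm _]].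
  destruct (continuity_ab_maj g 0 1 ltac:(lra) Cg') as [xM [HM _]].
  destruct (archimed (g xm)) as [A1 A2].
  set (p := (up (g xm) - 1)%Z).
  assert (Hp1 : IZR p + 1 = IZR (up (g xm))) by (unfold p; rewrite minus_IZR; simpl; ring).
  assert (NI : forall x k, g x <> IZR k) by (intros x k E; apply (NF x k); unfold g in E; lra).
  assert (Hxm : IZR p < g xm).
  { assert (IZR p <= g xm) by lra. destruct (Req_dec (IZR p) (g xm)) as [E|E].
    - exfalso; apply (NI xm p); auto.
    - lra. }
  assert (HxM : g xM < IZR p + 1).
  { destruct (Rlt_le_dec (g xM) (IZR p + 1)) as [L|L]; auto. exfalso.
    assert (Hy : Rmin (g xm) (g xM) <= IZR p + 1 <= Rmax (g xm) (g xM)).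
    { rewrite Rmin_left; [|lra]. rewrite Rmax_right; [|lra]. lra. }
    destruct (IVT_gen g xm xM (IZR p + 1) Cg Hy) as [z [_ Hz]].
    apply (NI z (up (g xm))). rewrite Hz; auto. }
  exists p, (Rmin (g xm - IZR p) (IZR p + 1 - g xM)). split.
  - apply Rmin_pos; lra.
  - intros x. destruct (archimed x) as [B1 B2].
    set (x' := x - IZR (up x - 1)).
    assert (Hx' : 0 <= x' <= 1) by (unfold x'; rewrite minus_IZR; simpl; lra).
    assert (E : g x = g x').
    { unfold g, x'. replace x with ((x - IZR (up x - 1)) + IZR (up x - 1)) at 1 by ring.
      rewrite (per_Z La). ring. }
    fold (g x). rewrite E. specialize (Hm x' Hx'). specialize (HM x' Hx').
    pose proof (Rmin_l (g xm - IZR p) (IZR p + 1 - g xM)).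
    pose proof (Rmin_r (g xm - IZR p) (IZR p + 1 - g xM)). lra.
Qed.

Lemma gap_iter a p d : (forall x, IZR p + d <= a x - x <= IZR p + 1 - d) ->
  forall N, INR N * (IZR p + d) <= D a N 0 <= INR N * (IZR p + 1 - d).
Proof.
  intros H N; induction N as [|N IH].
  - unfold D; simpl; lra.
  - unfold D in *. rewrite S_INR.
    change (Nat.iter (S N) a 0) with (a (Nat.iter N a 0)).
    specialize (H (Nat.iter N a 0)). lra.
Qed.

Lemma Z_abs_small (k : Z) : Rabs (3 * IZR k) <= 2 -> k = 0%Z.
Proof.
  intros H. apply Rabs_inv in H.
  destruct (Z.eq_dec k 0) as [E|E]; auto. exfalso.
  destruct (Z_lt_le_dec k 0) as [L|L].
  - assert (IZR k <= -1) by (apply IZR_le; lia). lra.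
  - assert (1 <= IZR k) by (apply IZR_le; lia). lra.
Qed.

Lemma dyn a b s c (k1 k2 k3 : Z) :
  liftp a -> liftp b -> liftp s -> liftp c -> continuity a ->
  (forall x, a (b x) = b (a x) + IZR k1) ->
  (forall x, s (a x) = b (s x) + IZR k2) ->
  (forall x, c (a (b x)) = a (c x) + IZR k3) ->
  exists x k, a x = x + IZR k.
Proof.
  intros La Lb Ls Lc Ca E1 E2 E3.
  assert (K1 : k1 = 0%Z).
  { assert (E1' : forall x, b (a x) = a (b x) + IZR (- k1)) by (intros; rewrite E1 opp_IZR; ring).
    pose proof (@iter_conj b a a (-k1) La E1' 3 0) as C.
    pose proof (L1 (iter_lift La 3) 0 (b 0)) as B1.
    pose proof (L1 Lb 0 (Nat.iter 3 a 0)) as B2.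
    apply Rabs_inv in B1. apply Rabs_inv in B2.
    rewrite mult_IZR opp_IZR in C. simpl (IZR (Z.of_nat 3)) in C.
    apply Z_abs_small. apply Rabs_le. lra. }
  subst k1.
  assert (Eab : forall x, a (b x) = b (a x)) by (intros; rewrite E1; ring).
  destruct (Classical_Prop.classic (exists x k, a x = x + IZR k)) as [Y|Nn]; auto.
  exfalso.
  assert (NF : forall x k, a x <> x + IZR k) by (intros x k E; apply Nn; eauto).
  destruct (gap La Ca NF) as [p [d [Hd Hg]]].
  destruct (archimed_cor1 (d / 8)) as [N [HN HN0]]; [lra|].
  assert (HNd : 8 < INR N * d).
  { assert (0 < INR N) by (apply lt_0_INR; auto).
    apply (Rmult_lt_compat_l (INR N)) in HN; auto.
    rewrite Rinv_r in HN; lra. }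
  pose proof (@conj_bound s a b k2 Ls Lb La E2 N) as B1.
  pose proof (@conj_bound c (fun x => a (b x)) a k3 Lc La (comp_lift La Lb) E3 N) as B2.
  pose proof (@comm_bound a b La Lb Eab N) as B3.
  pose proof (@gap_iter a p d Hg N) as G.
  apply Rabs_inv in B1; apply Rabs_inv in B2; apply Rabs_inv in B3.
  assert (HN' : 0 <= INR N) by apply pos_INR.
  destruct (Z_le_gt_dec (k2 + k3) p) as [L|L].
  - assert (IZR (k2 + k3) <= IZR p) by (apply IZR_le; lia).
    rewrite plus_IZR in H.
    assert (INR N * (IZR k2 + IZR k3) <= INR N * IZR p) by (apply Rmult_le_compat_l; auto).
    nra.
  - assert (IZR p + 1 <= IZR (k2 + k3)) by (rewrite -succ_IZR; apply IZR_le; lia).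
    rewrite plus_IZR in H.
    assert (INR N * (IZR p + 1) <= INR N * (IZR k2 + IZR k3)) by (apply Rmult_le_compat_l; auto).
    nra.
Qed.

Lemma bridge h : diff2_lift h -> liftp h /\ continuity h.
Proof.
  intros [C2 [Dp P]].
  assert (Cont : continuity h).
  { intros x. apply continuity_pt_filterlim. apply: ex_derive_continuous. apply (C2 x). }
  split; [split|]; auto.
  intros x y Hxy. destruct (Rle_lt_or_eq_dec x y Hxy) as [L|E]; [|subst; lra].
  left. apply (@incr_function h m_infty p_infty (Derive h)); simpl; auto.
  - intros z _ _. apply Derive_correct. apply C2.
  - intros z _ _. apply Dp.
Qed.

Theorem lemma4p2 (n : nat) (Hn : (4 < n)%N)
  (phi : (FG n -> FG n) -> R -> R)
  (Hlift : forall f, is_aut f -> diff2_lift (phi f))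
  (Hhom : forall f g, is_aut f -> is_aut g ->
     exists k : Z, forall x, phi (f \o g) x = phi f (phi g x) + IZR k) :
  forall i j : 'I_n, i <> j ->
    (forall f, is_Aij i j f -> circ_fixed_point (phi f)) /\
    (forall f, is_Bij i j f -> circ_fixed_point (phi f)).
Proof.
  intros i j Hij.
  have H2 : (2 < n)%N by apply: leq_trans Hn.
  destruct (third i j H2) as [k Hk]. move/andP: Hk => [Hik Hjk].
  have Hij' : i != j by apply/eqP.
  assert (Gen : forall f s, is_aut f -> f (gen i) = M s (gen i) (gen j) ->
            (forall m, m <> i -> f (gen m) = gen m) -> circ_fixed_point (phi f)).
  { intros f s Af Fi Fo.
    destruct (relations Hij' Hik Hjk Af Fi Fo) as [sg [b [c [[Asg Ab Ac] [R1 R2 R3]]]]].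
    destruct (bridge (Hlift f Af)) as [La Ca].
    destruct (bridge (Hlift b Ab)) as [Lb _].
    destruct (bridge (Hlift sg Asg)) as [Ls _].
    destruct (bridge (Hlift c Ac)) as [Lc _].
    destruct (Hhom f b Af Ab) as [k1a E1a].
    destruct (Hhom b f Ab Af) as [k1b E1b].
    destruct (Hhom sg f Asg Af) as [k2a E2a].
    destruct (Hhom b sg Ab Asg) as [k2b E2b].
    destruct (Hhom c (f \o b) Ac (is_aut_comp Af Ab)) as [k3a E3a].
    destruct (Hhom f c Af Ac) as [k3b E3b].
    unfold circ_fixed_point.
    apply (@dyn (phi f) (phi b) (phi sg) (phi c) (k1b - k1a) (k2b - k2a) (k3b - k1a - k3a)
             La Lb Ls Lc Ca).
    - intros x. rewrite !minus_IZR. specialize (E1a x). specialize (E1b x).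
      rewrite R1 in E1a. lra.
    - intros x. rewrite !minus_IZR. specialize (E2a x). specialize (E2b x).
      rewrite R2 in E2a. lra.
    - intros x. rewrite !minus_IZR. specialize (E3a x). specialize (E3b x).
      rewrite R3 E1a (per_Z Lc) in E3a. lra. }
  split.
  - intros f [Af [Fi Fo]]. exact (Gen f false Af Fi Fo).
  - intros f [Af [Fi Fo]]. exact (Gen f true Af Fi Fo).
Qed.
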